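(* As formal power series in $q$ (or for $|q|<1$), \[\sum_{\pi\in\overline{\mathcal{P}}}a^{\ell_o(\pi)}q^{|\pi|}=\sum_{m\ge0}\frac{q^m}{(q;q)_m}\sum_{j\ge0}a^jq^{\binom j2}{m\brack j}.\]
   Context: $\overline{\mathcal{P}}$ is the set of all overpartitions, including the empty one. An overpartition is a partition in which the first occurrence of each part size may be overlined. For an overpartition $\pi$: - $|\pi|$ is the sum of the sizes of its parts; - $\ell_o(\pi)$ is the number of overlined parts of $\pi$. $(a;q)_n=\prod_{i=0}^{n-1}(1-aq^i)$. The Gaussian binomial is ${M\brack N}=\frac{(q;q)_M}{(q;q)_N(q;q)_{M-N}}$ for $0\le N\le M$ and $0$ otherwise. *)

(* Defs.v *)
From mathcomp Require Import all_boot all_order all_algebra.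
Set Implicit Arguments. Unset Strict Implicit. Unset Printing Implicit Defensive.
Import GRing.Theory.
Local Open Scope ring_scope.

(* An overpartition is represented as the sequence of its parts in
   nonincreasing order, each part being a pair (size, overlined?).
   Parts are positive; consecutive parts are either strictly decreasing in
   size, or of equal size with the later one NOT overlined.  Hence within a
   block of equal sizes only the first occurrence may be overlined. *)
Definition op_rel (x y : nat * bool) : bool :=
  (y.1 < x.1)%N || ((y.1 == x.1) && ~~ y.2).

Definition is_overpartition (s : seq (nat * bool)) : bool :=
  all (fun x => 0 < x.1)%N s && sorted op_rel s.

Definition op_size (s : seq (nat * bool)) : nat := sumn (map fst s).
Definition op_lo (s : seq (nat * bool)) : nat := count snd s.

Definition op_of_tuple n k (t : k.-tuple ('I_n.+1 * bool)) : seq (nat * bool) :=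
  map (fun x => (nat_of_ord x.1, x.2)) t.

(* Every such pi has at most n parts, each of size at most n, so it is
   represented exactly once as a k.-tuple of ('I_n.+1 * bool), k <= n. *)
Definition overpart_coef (R : comNzRingType) (a : R) (n : nat) : R :=
  \sum_(k < n.+1)
     \sum_(t : k.-tuple ('I_n.+1 * bool) |
            is_overpartition (op_of_tuple t) && (op_size (op_of_tuple t) == n))
        a ^+ op_lo (op_of_tuple t).

Definition fps (R : comNzRingType) := nat -> R.

Definition fps_of_poly (R : comNzRingType) (p : {poly R}) : fps R := fun n => p`_n.

Definition fps_mul (R : comNzRingType) (f g : fps R) : fps R :=
  fun n => \sum_(i < n.+1) f i * g (n - i)%N.

(* Coefficients 0..n of the multiplicative inverse of a series f with
   constant term 1:  g_0 = 1,  g_n = - sum_{i=1}^n f_i g_{n-i}. *)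
Fixpoint fps_inv_seq (R : comNzRingType) (f : fps R) (n : nat) : seq R :=
  match n with
  | 0 => [:: 1]
  | n'.+1 => let s := fps_inv_seq f n' in
             rcons s (- \sum_(1 <= i < n'.+2) f i * nth 0 s (n'.+1 - i))
  end.

(* 1/f, for f with f 0 = 1 (only used for such f below). *)
Definition fps_inv (R : comNzRingType) (f : fps R) : fps R :=
  fun n => nth 0 (fps_inv_seq f n) n.

Definition qpoch (R : comNzRingType) (n : nat) : {poly R} :=
  \prod_(i < n) (1 - 'X^(i.+1)).

Definition gauss_binom (R : comNzRingType) (M N : nat) : fps R :=
  if (N <= M)%N then
    fps_mul (fps_of_poly (qpoch R M))
      (fps_mul (fps_inv (fps_of_poly (qpoch R N)))
               (fps_inv (fps_of_poly (qpoch R (M - N)))))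
  else fun _ => 0.

(* Main.v *)
Require Import Defs.
From mathcomp Require Import all_boot all_order all_algebra.
From mathcomp Require Import ring zify.
Import GRing.Theory.
Set Implicit Arguments. Unset Strict Implicit. Unset Printing Implicit Defensive.

Definition bok (m p : nat) : seq bool :=
  if (p < m)%N then [:: true; false] else if p == m then [:: false] else [::].
Definition cands (m n : nat) : seq (nat * bool) :=
  [seq (p, b) | p <- iota 1 n, b <- bok m p].

Fixpoint opsF (fuel m n : nat) : seq (seq (nat * bool)) :=
  match fuel with
  | 0 => if n == 0 then [:: [::]] else [::]
  | f.+1 => if n == 0 then [:: [::]] else
      [seq x :: s | x <- cands m n, s <- opsF f x.1 (n - x.1)]
  end.

Definition opP (m n : nat) (s : seq (nat * bool)) : bool :=
  [&& all (fun x => 0 < x.1)%N s, path op_rel (m, false) s & op_size s == n].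

Lemma mem_cands m n x : (x \in cands m n) = [&& 0 < x.1, x.1 <= n & op_rel (m,false) x]%N.
Proof.
case: x => p b /=; apply/allpairsPdep/idP.
  case=> [q [c [Hq Hc [-> ->]]]]; move: Hq Hc; rewrite mem_iota /bok /op_rel /=.
  move=> /andP [Hq1 Hq2].
  have -> : (0 < q)%N by lia.
  have -> : (q <= n)%N by lia.
  case: ltngtP => //= H; rewrite ?inE; case: c => //=.
move=> /and3P [H1 H2 H3]; exists p, b; split => //; first by rewrite mem_iota; apply/andP; split; lia.
move: H3; rewrite /bok /op_rel /=; case: ltngtP => //= _; case: b => //.
Qed.

Lemma path_op_rel p b c s : path op_rel (p, b) s = path op_rel (p, c) s.
Proof. by case: s. Qed.

Lemma opsF_mem fuel m n s : (n <= fuel)%N -> (s \in opsF fuel m n) = opP m n s.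
Proof.
elim: fuel m n s => [|f IH] m n s Hn.
  have -> : n = 0 by lia.
  case: s => [|x s] //=; rewrite /opP /= ?inE //.
  by rewrite /op_size /=; case: x => [[|p] b] /=; rewrite ?addSn /= ?andbF.
rewrite /=; case: eqP => [->|Hn0].
  case: s => [|[p b] s]; rewrite /opP ?inE //=.
  by rewrite /op_size /=; case: p => [|p] /=; rewrite ?addSn /= ?andbF.
case: s => [|[p b] s].
  rewrite /opP /op_size /=; have ->: (0 == n) = false by apply/eqP => H; apply Hn0.
  by apply/negbTE/allpairsPdep => -[x [y [_ _ //]]].
apply/allpairsPdep/idP.
  case=> [x [y [Hx Hy [E1 E2]]]]; subst x y.
  move: Hx; rewrite mem_cands /= => /and3P [H1 H2 H3].
  rewrite IH in Hy; last by simpl in *; lia.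
  move: Hy; rewrite /opP /= => /and3P [A1 A2 A3].
  rewrite H1 A1 H3 /=; rewrite (path_op_rel p b false) A2 /=.
  rewrite /op_size /= in A3 *; apply/eqP; move/eqP: A3; lia.
rewrite /opP /= => /and3P [/andP [H1 A1] /andP [H3 A2] A3].
exists (p, b), s; split => //.
  rewrite mem_cands /= H1 H3 /=; rewrite /op_size /= in A3; move/eqP: A3; lia.
rewrite IH; last by simpl in *; lia.
rewrite /opP A1 -(path_op_rel p b false) A2 /=.
rewrite /op_size /= in A3 *; apply/eqP; move/eqP: A3; lia.
Qed.

Lemma cands_uniq m n : uniq (cands m n).
Proof.
apply: allpairs_uniq_dep; first exact: iota_uniq.
  by move=> p _; rewrite /bok; case: ltngtP.
by move=> [p b] [q c] _ _ /= [-> ->].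
Qed.

Lemma opsF_uniq fuel m n : uniq (opsF fuel m n).
Proof.
elim: fuel m n => [|f IH] m n /=; first by case: (n == 0).
case: (n == 0) => //.
apply: allpairs_uniq_dep; first exact: cands_uniq.
  by move=> x _; exact: IH.
by move=> [x s] [y t] _ _ /= [-> ->].
Qed.

Section Gsec.
Variable (R : comNzRingType) (a : R).
Local Open Scope ring_scope.

Definition Gc m n : R := \sum_(s <- opsF n m n) a ^+ op_lo s.

Lemma G_fuel f m n : (n <= f)%N -> \sum_(s <- opsF f m n) a ^+ op_lo s = Gc m n.
Proof.
move=> Hf; rewrite /Gc; apply: perm_big; apply: uniq_perm; rewrite ?opsF_uniq //.
by move=> s; rewrite !opsF_mem.
Qed.

Lemma G0 m : Gc m 0 = 1.
Proof. by rewrite /Gc /= big_cons big_nil addr0. Qed.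

Definition wt m p : R := if (p < m)%N then a + 1 else if p == m then 1 else 0.

Lemma G_rec m n : Gc m n.+1 = \sum_(1 <= p < n.+2) wt m p * Gc p (n.+1 - p).
Proof.
rewrite {1}/Gc /= big_allpairs_dep /cands big_allpairs_dep.
rewrite /index_iota subSS subn0 big_seq [RHS]big_seq; apply: eq_bigr => p.
rewrite mem_iota => /andP [H1 H2].
have E b : \sum_(s <- opsF n (p, b).1 (n.+1 - (p, b).1)) a ^+ op_lo ((p, b) :: s)
   = a ^+ b * Gc p (n.+1 - p).
  rewrite /= -(@G_fuel n); last by lia.
  rewrite big_distrr /=; apply: eq_bigr => s _.
  by rewrite /op_lo /= exprD.
under eq_bigr => b _ do rewrite E.
rewrite /bok /wt; case: ltngtP => _; rewrite ?big_cons ?big_nil /= ?expr1 ?expr0; ring.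
Qed.

Lemma wtS m p : wt m.+1 p = wt m p + (if p == m then a else 0) + (if p == m.+1 then 1 else 0).
Proof.
rewrite /wt; case: (ltngtP p m) => H.
- have -> : (p < m.+1)%N by lia. have -> : (p == m.+1) = false by apply/eqP; lia.
  ring.
- have -> : (p < m.+1)%N = false by lia.
  case: eqP => E; ring.
- subst. rewrite ltnSn.
  have -> : (m == m.+1) = false by apply/eqP; lia.
  ring.
Qed.

Lemma sum_ind (F : nat -> R) (c : R) j lo hi :
  \sum_(lo <= p < hi) (if p == j then c else 0) * F p = if (lo <= j < hi)%N then c * F j else 0.
Proof.
rewrite -(big_nat1_eq (@GRing.add R) (fun p => c * F p)) big_mkcond; apply: eq_bigr => p _.
by case: eqP => _; rewrite ?mul0r.
Qed.

Lemma G_zero k : Gc 0 k = (k == 0)%:R.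
Proof.
case: k => [|k]; first by rewrite G0.
rewrite G_rec big_nat big1 // => p /andP [H1 _].
by rewrite /wt ltn0 (_ : (p == 0) = false) ?mul0r //; apply/eqP; lia.
Qed.

Lemma G_step m k :
  Gc m.+1 k - (if (k < m.+1)%N then 0 else Gc m.+1 (k - m.+1))
  = Gc m k + (if m is 0 then 0 else a) * (if (k < m)%N then 0 else Gc m (k - m)).
Proof.
case: k => [|k].
  rewrite !G0 /=; case: m => [|m] /=; rewrite ?mul0r; ring.
rewrite !G_rec.
under eq_bigr => p _ do rewrite wtS !mulrDl.
rewrite !big_split /= !sum_ind.
case: m => [|m] /=; repeat (case: ifP => ?); try (exfalso; lia); rewrite ?mul1r ?mul0r ?subSS; ring.
Qed.

End Gsec.

Lemma elem_le s x : x \in s -> (x.1 <= op_size s)%N.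
Proof.
elim: s => [|y s IH] //=; rewrite inE => /orP [/eqP ->|H].
  rewrite /op_size /=; lia.
move: (IH H); rewrite /op_size /=; lia.
Qed.

Lemma size_le s : all (fun x => 0 < x.1)%N s -> (size s <= op_size s)%N.
Proof.
elim: s => [|y s IH] //= /andP [H1 H2]; move: (IH H2); rewrite /op_size /=; lia.
Qed.

Lemma in_map_op n k (s : seq (nat * bool)) :
  (forall x, x \in s -> x.1 < n.+1)%N ->
  (s \in [seq op_of_tuple t | t <- index_enum (k.-tuple ('I_n.+1 * bool))])
  = (size s == k).
Proof.
move=> Hs; apply/mapP/idP.
  by case=> t _ ->; rewrite /op_of_tuple size_map size_tuple.
move=> /eqP Hk.
pose u := [seq ((inord x.1 : 'I_n.+1), x.2) | x <- s].
have Hu : size u == k by rewrite size_map Hk.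
exists (Tuple Hu); first exact: mem_index_enum.
rewrite /op_of_tuple /= /u -map_comp -[LHS]map_id; apply/eq_in_map => x Hx /=.
by rewrite inordK ?Hs //; case: x Hx.
Qed.

Section Bridge.
Variable (R : comNzRingType) (a : R).
Local Open Scope ring_scope.

Lemma bridge_k n k :
  \sum_(t : k.-tuple ('I_n.+1 * bool) |
         is_overpartition (op_of_tuple t) && (op_size (op_of_tuple t) == n))
      a ^+ op_lo (op_of_tuple t)
  = \sum_(s <- opsF n n.+1 n | size s == k) a ^+ op_lo s.
Proof.
rewrite -(big_map (@op_of_tuple n k) (fun s => is_overpartition s && (op_size s == n)) (fun s => a ^+ op_lo s)).
rewrite -[LHS]big_filter -[RHS]big_filter; apply: perm_big; apply: uniq_perm.
- rewrite filter_uniq // map_inj_uniq ?index_enum_uniq //.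
  move=> t1 t2 /= E; apply: val_inj; apply: (inj_map _ E) => -[i b] [j c] /= [/val_inj -> ->] //.
- by rewrite filter_uniq // opsF_uniq.
move=> s; rewrite !mem_filter opsF_mem // /opP /is_overpartition.
case Ha: (all _ s) => //=; case Hn: (op_size s == n); rewrite ?andbF ?andbT //=.
have Hb : forall x, x \in s -> (x.1 < n.+1)%N.
  by move=> x /elem_le; move/eqP: Hn => ->.
rewrite in_map_op //.
case: s Ha Hn Hb => [|y s] /= Ha Hn Hb; first by rewrite andbT.
rewrite {2}/op_rel. have -> : (y.1 < n.+1)%N by apply: Hb; rewrite inE eqxx.
by rewrite /= andbC.
Qed.

Lemma bridge n : overpart_coef a n = Gc a n.+1 n.
Proof.
rewrite /overpart_coef.
under eq_bigr => k _ do rewrite bridge_k big_mkcond.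
rewrite exchange_big /Gc /= [LHS]big_seq [RHS]big_seq; apply: eq_bigr => s Hs.
rewrite -big_mkcond /=.
have Hsz : (size s < n.+1)%N.
  move: Hs; rewrite opsF_mem // /opP => /and3P [H1 _ /eqP H3].
  by have := size_le H1; rewrite H3.
by rewrite (big_pred1 (Ordinal Hsz)) // => k /=; rewrite eq_sym.
Qed.

End Bridge.



Section Poly.
Variable R : comNzRingType.
Local Open Scope ring_scope.
Implicit Types (c p : {poly R}).

Notation Q := (qpoch R).

Lemma Q0 : Q 0 = 1.
Proof. by rewrite /qpoch big_ord0. Qed.

Lemma QS m : Q m.+1 = Q m * (1 - 'X^(m.+1)).
Proof. by rewrite /qpoch big_ord_recr. Qed.

Lemma Q_coef0 m : (Q m)`_0 = 1.
Proof.
elim: m => [|m IH]; first by rewrite Q0 coef1.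
by rewrite QS coef0M IH coefB coef1 coefXn /= subr0 mulr1.
Qed.

Fixpoint Gp (m j : nat) : {poly R} :=
  match m with
  | 0 => (j == 0)%:R
  | m'.+1 => match j with 0 => 1 | j'.+1 => Gp m' j' + 'X^(j'.+1) * Gp m' j'.+1 end
  end.

Lemma Gp_gt m j : (m < j)%N -> Gp m j = 0.
Proof.
elim: m j => [|m IH] [|j] //= H.
by rewrite !IH ?mulr0 ?addr0 //; lia.
Qed.

Lemma Gp_Q m j : (j <= m)%N -> Q j * Q (m - j) * Gp m j = Q m.
Proof.
elim: m j => [|m IH] [|j] //= H.
- by rewrite Q0 !mul1r.
- by rewrite Q0 subn0 mul1r mulr1.
rewrite subSS.
have H1 := IH j H.
case: (ltngtP j m) => Hjm.
- have H2 := IH j.+1 Hjm.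
  have E : (m - j = (m - j.+1).+1)%N by lia.
  have EX : 'X^(m.+1) = 'X^(j.+1) * 'X^((m - j.+1).+1) :> {poly R}.
    by rewrite -exprD; congr ('X^_); lia.
  transitivity ((1 - 'X^(j.+1)) * (Q j * Q (m - j) * Gp m j)
     + 'X^(j.+1) * (1 - 'X^((m - j.+1).+1)) * (Q j.+1 * Q (m - j.+1) * Gp m j.+1)).
    rewrite {1 2}E QS [Q (m - j.+1).+1]QS; ring.
  rewrite H1 H2 QS EX; ring.
- by exfalso; lia.
- subst j. rewrite (Gp_gt (ltnSn m)) mulr0 addr0 subnn Q0 mulr1 QS.
  by rewrite subnn Q0 mulr1 in H1; rewrite -{2}H1; ring.
Qed.

Lemma Gp_m0 m : Gp m 0 = 1.
Proof. by case: m. Qed.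

Definition tt c j := c ^+ j * 'X^('C(j, 2)).

Lemma ttS c j : tt c j.+1 = c * tt (c * 'X) j.
Proof.
rewrite /tt binS bin1 exprD exprS exprMn; ring.
Qed.

Lemma ttX c j : tt c j * 'X^j = tt (c * 'X) j.
Proof. rewrite /tt exprMn; ring. Qed.

Lemma qbinom m c : \sum_(j < m.+1) tt c j * Gp m j = \prod_(i < m) (1 + c * 'X^i).
Proof.
elim: m c => [|m IH] c.
  by rewrite big_ord1 big_ord0 /tt /= expr0 mul1r mulr1.
rewrite big_ord_recl big_ord_recl /=.
under eq_bigr => j _ do rewrite mulrDr.
rewrite big_split /=.
have E1 : \sum_(i < m.+1) tt c (bump 0 i) * Gp m i = c * \prod_(i < m) (1 + c * 'X * 'X^i).
  rewrite -IH big_distrr /=; apply: eq_bigr => i _; rewrite /bump /= add1n ttS; ring.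
have E2 : 1 + \sum_(i < m.+1) tt c (bump 0 i) * ('X^(i.+1) * Gp m i.+1)
        = \prod_(i < m) (1 + c * 'X * 'X^i).
  rewrite -IH big_ord_recr /= Gp_gt // !mulr0 addr0 [RHS]big_ord_recl /=.
  congr (_ + _); first by rewrite /tt /= ?expr0 ?mul1r ?Gp_m0.
  by apply: eq_bigr => i _; rewrite /bump /= !add1n mulrA ttX.
under eq_bigr => i _ do rewrite add0n.
under [X in _ + (_ + X)]eq_bigr => i _ do rewrite add0n.
have -> : tt c 0 = 1 by rewrite /tt /= !expr0 mulr1.
rewrite mulr1 addrCA E2 E1.
under [X in _ = _ * X]eq_bigr => i _ do rewrite /bump /= add1n exprS mulrA.
rewrite expr0; ring.
Qed.

End Poly.

Section Mod.
Variable (R : comNzRingType) (T : nat).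
Local Open Scope ring_scope.

Definition eqm (p q : {poly R}) := forall k, (k < T)%N -> p`_k = q`_k.

Lemma eqm_refl p : eqm p p. Proof. by []. Qed.
Lemma eqm_sym p q : eqm p q -> eqm q p. Proof. by move=> H k Hk; rewrite H. Qed.
Lemma eqm_trans p q r : eqm p q -> eqm q r -> eqm p r.
Proof. by move=> H1 H2 k Hk; rewrite H1 ?H2. Qed.
Lemma eqmD p q p' q' : eqm p p' -> eqm q q' -> eqm (p + q) (p' + q').
Proof. by move=> H1 H2 k Hk; rewrite !coefD H1 ?H2. Qed.
Lemma eqmM p q p' q' : eqm p p' -> eqm q q' -> eqm (p * q) (p' * q').
Proof.
move=> H1 H2 k Hk; rewrite !coefM; apply: eq_bigr => i _.
rewrite H1 ?H2 //; first lia. by have := ltn_ord i; lia.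
Qed.
Lemma eqm_sum (I : Type) (r : seq I) (F G : I -> {poly R}) :
  (forall i, eqm (F i) (G i)) -> eqm (\sum_(i <- r) F i) (\sum_(i <- r) G i).
Proof. by move=> H k Hk; rewrite !coef_sum; apply: eq_bigr => i _; rewrite H. Qed.

Definition tr (f : fps R) : {poly R} := \poly_(i < T) f i.

Lemma trE f k : (k < T)%N -> (tr f)`_k = f k.
Proof. by move=> Hk; rewrite coef_poly Hk. Qed.

Lemma fps_mulE f g k : (k < T)%N -> fps_mul f g k = (tr f * tr g)`_k.
Proof.
move=> Hk; rewrite coefM /fps_mul; apply: eq_bigr => i _.
have := ltn_ord i => Hi; rewrite !trE //; lia.
Qed.

Lemma tr_poly p : eqm (tr (fps_of_poly p)) p.
Proof. by move=> k Hk; rewrite trE. Qed.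

Lemma tr_mul f g : eqm (tr (fps_mul f g)) (tr f * tr g).
Proof. by move=> k Hk; rewrite trE // fps_mulE. Qed.

Lemma tr_ext f g : (forall k, (k < T)%N -> f k = g k) -> eqm (tr f) (tr g).
Proof. by move=> H k Hk; rewrite !trE // H. Qed.

End Mod.

Section Inv.
Variable (R : comNzRingType).
Local Open Scope ring_scope.

Lemma size_inv_seq (f : fps R) n : size (fps_inv_seq f n) = n.+1.
Proof. by elim: n => [|n IH] //=; rewrite size_rcons IH. Qed.

Lemma nth_inv (f : fps R) n i : (i <= n)%N -> nth 0 (fps_inv_seq f n) i = fps_inv f i.
Proof.
elim: n => [|n IH] Hi; first by have -> : i = 0%N by lia.
case: (ltnP i n.+1) => H.
  by rewrite /= nth_rcons size_inv_seq H IH.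
have -> : i = n.+1 by lia.
by rewrite /fps_inv.
Qed.

Lemma inv_rec (f : fps R) k :
  fps_inv f k.+1 = - \sum_(1 <= i < k.+2) f i * fps_inv f (k.+1 - i)%N.
Proof.
rewrite {1}/fps_inv /= nth_rcons size_inv_seq ltnn eqxx; congr (- _).
rewrite big_nat [RHS]big_nat; apply: eq_bigr => i /andP [H1 H2].
by rewrite nth_inv //; lia.
Qed.

Lemma inv_mul (f : fps R) : f 0%N = 1 ->
  forall k, \sum_(i < k.+1) f i * fps_inv f (k - i)%N = (k == 0%N)%:R.
Proof.
move=> Hf [|k]; first by rewrite big_ord1 Hf mul1r /fps_inv.
rewrite big_ord_recl Hf mul1r subn0 inv_rec /=.
rewrite big_add1 /= big_mkord.
under [X in _ + X]eq_bigr => i _ do rewrite /bump /= add1n subSS.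
under [X in - X]eq_bigr => i _ do rewrite subSS.
by rewrite addNr.
Qed.

Lemma tr_inv (T : nat) (f : fps R) : f 0%N = 1 -> eqm T (tr T (fps_inv f) * tr T f) 1.
Proof.
move=> Hf k Hk; rewrite mulrC coefM coef1 -(inv_mul Hf k); apply: eq_bigr => i _.
have := ltn_ord i => Hi; rewrite !trE //; lia.
Qed.

End Inv.

Arguments Gp {R} m j.
Section Main.
Variable (R : comNzRingType) (a : R) (T : nat).
Local Open Scope ring_scope.

Notation Q := (qpoch R).
Definition Iq k := tr T (fps_inv (fps_of_poly (Q k))).

Lemma IQ k : eqm T (Iq k * Q k) 1.
Proof.
apply: (eqm_trans (eqmM (eqm_refl _) (eqm_sym (tr_poly _)))).
by apply: tr_inv; rewrite /fps_of_poly Q_coef0.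
Qed.

Lemma gb_eqm m j : eqm T (tr T (gauss_binom R m j)) (Gp m j).
Proof.
rewrite /gauss_binom; case: leqP => Hj; last first.
  by move=> k Hk; rewrite trE // Gp_gt // coef0.
apply: (eqm_trans (tr_mul _ _)).
apply: (eqm_trans (eqmM (tr_poly _) (tr_mul _ _))).
apply: eqm_sym.
rewrite -[X in eqm _ X _](mulr1 (Gp m j)) -[X in Gp m j * X](mulr1 1).
apply: (eqm_trans (eqmM (eqm_refl (Gp m j)) (eqmM (eqm_sym (IQ j)) (eqm_sym (IQ (m - j)))))).
have -> : Gp m j * (Iq j * Q j * (Iq (m - j) * Q (m - j)))
   = (Q j * Q (m - j) * Gp m j) * (Iq j * Iq (m - j)) by ring.
by rewrite Gp_Q.
Qed.

Lemma S_eqm m N : (m < N)%N ->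
  eqm T (tr T (fun k => \sum_(j < N) a ^+ j *
     fps_mul (fps_of_poly ('X^('C(j, 2)) : {poly R})) (gauss_binom R m j) k))
    (\prod_(i < m) (1 + a%:P * 'X^i)).
Proof.
move=> HmN k Hk; rewrite trE // -qbinom coef_sum.
rewrite (big_ord_widen N (fun j => (tt a%:P j * Gp m j)`_k) HmN) [RHS]big_mkcond /=.
apply: eq_bigr => j _.
rewrite (fps_mulE _ _ Hk) (eqmM (tr_poly _) (gb_eqm m j)) //.
case: (ltnP j m.+1) => H.
  by rewrite /tt -rmorphXn -mulrA coefCM.
by rewrite Gp_gt // mulr0 coef0 mulr0.
Qed.

Definition g m := tr T (Gc a m).

Lemma trif (f : fps R) k d : (k < T)%N ->
  (if (k < d)%N then 0 else (tr T f)`_(k - d)) = if (k < d)%N then 0 else f (k - d)%N.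
Proof. by move=> Hk; case: ifP => // _; rewrite trE //; lia. Qed.

Lemma g_step m : eqm T (g m.+1 * (1 - 'X^(m.+1))) (g m * (1 + (if m is 0 then 0 else a)%:P * 'X^m)).
Proof.
move=> k Hk; rewrite mulrBr mulr1 coefB coefMXn mulrDr mulr1 coefD mulrCA coefCM coefMXn.
by rewrite /g !trif // !trE // G_step.
Qed.

Definition Pb m := \prod_(i < m) (1 + (if nat_of_ord i is 0 then 0 else a)%:P * 'X^i).

Lemma gQ m : eqm T (g m * Q m) (Pb m).
Proof.
elim: m => [|m IH].
  by rewrite Q0 mulr1 /Pb big_ord0 => k Hk; rewrite /g trE // G_zero coef1.
rewrite QS /Pb big_ord_recr /= -/(Pb m).
rewrite (_ : g m.+1 * (Q m * (1 - 'X^(m.+1))) = (g m.+1 * (1 - 'X^(m.+1))) * Q m); last by ring.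
apply: (eqm_trans (eqmM (g_step m) (eqm_refl _))).
rewrite (_ : g m * (1 + (if m is 0 then 0 else a)%:P * 'X^m) * Q m
   = (g m * Q m) * (1 + (if m is 0 then 0 else a)%:P * 'X^m)); last by ring.
exact: eqmM IH (eqm_refl _).
Qed.

Lemma Pfull m : \prod_(i < m.+1) (1 + a%:P * 'X^i) = (1 + a%:P) * Pb m.+1.
Proof.
rewrite /Pb !big_ord_recl /= expr0 mulr1 polyC0 mul0r addr0 mul1r; congr (_ * _).
Qed.

Lemma term_val m N n : (n < T)%N -> (m < N)%N ->
  fps_mul (fps_of_poly ('X^m : {poly R}))
       (fps_mul (fps_inv (fps_of_poly (qpoch R m)))
          (fun k => \sum_(j < N)
                      a ^+ j * fps_mul (fps_of_poly ('X^('C(j, 2)) : {poly R}))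
                                       (gauss_binom R m j) k)) n
  = if m == 0%N then (n == 0%N)%:R else (1 + a) * (if (n < m)%N then 0 else Gc a m (n - m)).
Proof.
move=> Hn HmN; rewrite (fps_mulE _ _ Hn).
rewrite (eqmM (tr_poly _) (eqm_trans (tr_mul _ _) (eqmM (eqm_refl (Iq m)) (S_eqm HmN)))) //.
case: m HmN => [|m] HmN /=.
  rewrite big_ord0 expr0 mul1r mulr1.
  by have := IQ 0 Hn; rewrite Q0 mulr1 coef1.
rewrite Pfull.
have E : eqm T ('X^(m.+1) * (Iq m.+1 * ((1 + a%:P) * Pb m.+1)))
             ((1 + a%:P) * ('X^(m.+1) * g m.+1)).
  apply: (eqm_trans (eqmM (eqm_refl _) (eqmM (eqm_refl _) (eqmM (eqm_refl _) (eqm_sym (gQ m.+1)))))).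
  rewrite (_ : 'X^(m.+1) * (Iq m.+1 * ((1 + a%:P) * (g m.+1 * Q m.+1)))
     = ((1 + a%:P) * ('X^(m.+1) * g m.+1)) * (Iq m.+1 * Q m.+1)); last by ring.
  rewrite -[X in eqm _ _ X]mulr1.
  exact: eqmM (eqm_refl _) (IQ _).
rewrite E // mulrDl mul1r coefD coefCM coefXnM /g trif //.
by case: ifP => _; ring.
Qed.

End Main.

Unset Implicit Arguments.
Local Open Scope ring_scope.

Theorem mainTheorem10 (R : comNzRingType) (a : R) (n N : nat) :
  (n < N)%N ->
  overpart_coef a n =
  \sum_(m < N)
     fps_mul (fps_of_poly ('X^m : {poly R}))
       (fps_mul (fps_inv (fps_of_poly (qpoch R m)))
          (fun k => \sum_(j < N)
                      a ^+ j * fps_mul (fps_of_poly ('X^('C(j, 2)) : {poly R}))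
                                       (gauss_binom R m j) k)) n.
Proof.
move=> HnN; rewrite bridge.
under eq_bigr => m _ do rewrite (term_val a (ltnSn n) (ltn_ord m)).
case: N HnN => [//|N] HnN.
rewrite big_ord_recl /=.
under eq_bigr => i _ do rewrite /bump /= add1n.
rewrite -(big_mkord xpredT (fun i => (1 + a) * (if (n < i.+1)%N then 0 else Gc a i.+1 (n - i.+1)))).
rewrite (big_cat_nat (n := n)) //=.
have -> : \sum_(n <= i < N) (1 + a) * (if (n < i.+1)%N then 0 else Gc a i.+1 (n - i.+1)) = 0.
  rewrite big_nat big1 // => i /andP [H1 H2].
  by rewrite (_ : (n < i.+1)%N) ?mulr0 //; lia.
rewrite addr0.
case: n HnN => [|n] HnN.
  by rewrite G0 big_geq // addr0.
rewrite G_rec add0r big_add1 /= big_nat [RHS]big_nat; apply: eq_bigr => i /andP [H1 H2].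
rewrite /wt (_ : (i.+1 < n.+2)%N) // (_ : (n.+1 < i.+1)%N = false); last by lia.
by rewrite addrC.
Qed.
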